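(* There exists a sequence of integers $(q_k)_{k\ge1}$ with $q_k\ge2$ for all $k\in\mathbb{N}$ and $\liminf_{k\to\infty} q_k/k = 1$ such that for each $C>0$ there exist $n\in\mathbb{N}$ and a collection $\mathcal{A}$ of hyperplanes (each with non-empty set of fixed coordinates) whose union is $Q:=[q_1]\times\cdots\times[q_n]$, no two of which are parallel, and with $F(A)\cap[C]=\emptyset$ for every $A\in\mathcal{A}$.
   Context: $[m]=\{1,\dots,m\}$. A hyperplane in $Q=S_1\times\cdots\times S_n$ is $A=A_1\times\cdots\times A_n$ with each $A_k$ either $S_k$ or a singleton in $S_k$; $F(A)=\{k:A_k\text{ is a singleton}\}$ is its set of fixed coordinates; two hyperplanes are parallel if they have the same set of fixed coordinates. *)

(* Defs.v *)
From HB Require Import structures.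
From mathcomp Require Import all_boot all_order all_algebra.
From mathcomp Require Import all_classical all_reals all_analysis.
From mathcomp Require Import Rstruct.
Set Implicit Arguments. Unset Strict Implicit. Unset Printing Implicit Defensive.

(* Coordinates of Q = [q_1] x ... x [q_n] are indexed by k : 'I_n, standing
   for the coordinate k+1; S_{k+1} = [q_{k+1}] = {1, ..., q (k+1)}.
   A hyperplane A = A_1 x ... x A_n is encoded by A : 'I_n -> option nat,
   where A k = None means A_{k+1} = S_{k+1}, and A k = Some a means
   A_{k+1} = {a} (with a in S_{k+1}). *)

Definition hyperplane (q : nat -> nat) (n : nat) (A : 'I_n -> option nat) : Prop :=
  forall k : 'I_n, match A k with
                   | None => (True : Prop)
                   | Some a => is_true (1 <= a <= q k.+1)%N
                   end.

Definition fixedc (n : nat) (A : 'I_n -> option nat) (k : 'I_n) : bool :=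
  A k != None.

Definition has_fixed (n : nat) (A : 'I_n -> option nat) : Prop :=
  exists k : 'I_n, fixedc A k.

Definition parallel (n : nat) (A B : 'I_n -> option nat) : Prop :=
  forall k : 'I_n, fixedc A k = fixedc B k.

Definition inQ (q : nat -> nat) (n : nat) (x : 'I_n -> nat) : Prop :=
  forall k : 'I_n, (1 <= x k <= q k.+1)%N.

Definition in_hyp (n : nat) (x : 'I_n -> nat) (A : 'I_n -> option nat) : Prop :=
  forall k : 'I_n, match A k with
                   | None => (True : Prop)
                   | Some a => (x k = a : Prop)
                   end.

(* the sequence k |-> q_k / k for k >= 1 (shifted to start at index 0),
   as extended reals *)
Definition ratio_seq (q : nat -> nat) : nat -> \bar Rdefinitions.R :=
  fun k => (((q k.+1)%:R / (k.+1)%:R : Rdefinitions.R)%R)%:E.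

(* Main.v *)
Require Import Defs.
From HB Require Import structures.
From mathcomp Require Import all_boot all_order all_algebra.
From mathcomp Require Import all_classical all_reals all_analysis.
From mathcomp Require Import Rstruct.
From mathcomp Require Import Rstruct_topology.
From mathcomp Require Import zify ring lra.
Set Implicit Arguments. Unset Strict Implicit. Unset Printing Implicit Defensive.
Import Order.TTheory GRing.Theory Num.Theory.

(* Proof idea: q_k = max(2, k - floor(k/(J(k)+2))) with J(k) = log2 log2 log2 k,
   so q_k/k -> 1.  For a given C we take a block of coordinates on which
   J is constant = j, and cover Q with one hyperplane for every nonempty set
   of coordinates of the block, the values being chosen greedily; a first
   moment (averaging) argument shows that nothing stays uncovered because
   prod_(k in block) (1 + 1/q_k) - 1 > log |Q|. *)

Section Greedy.
Variables (T X I : finType) (x0 : X).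
Variable f : I -> T -> X.
Variable N : I -> nat.

Lemma pigeon (i : I) (U : {set T}) :
  #|[set f i x | x in U]| <= N i ->
  exists v, #|U| <= #|[set x in U | f i x == v]| * N i.
Proof.
move=> HN.
pose c v := #|[set x in U | f i x == v]|.
have [v Hv] : exists v, forall w, c w <= c v.
  exists [arg max_(v > x0) c v]; case: arg_maxnP => //= v _ H w; exact: H.
exists v.
have -> : #|U| = \sum_(w in [set f i x | x in U]) c w.
  rewrite -sum1_card (partition_big_imset (f i)) /=.
  apply: eq_bigr => w _; rewrite /c -sum1_card.
  by apply: eq_bigl => x; rewrite inE.
apply: leq_trans (_ : \sum_(w in [set f i x | x in U]) c v <= _).
  by apply: leq_sum => w _; exact: Hv.
rewrite sum_nat_const mulnC leq_mul2l HN orbT //.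
Qed.

Lemma greedy (s : seq I) (U : {set T}) :
  uniq s -> (forall i, i \in s -> #|[set f i x | x in U]| <= N i) ->
  exists a : I -> X,
    #|[set x in U | all (fun i => f i x != a i) s]| * \prod_(i <- s) N i
      <= #|U| * \prod_(i <- s) (N i).-1.
Proof.
elim: s U => [|i s IH] U /=.
  move=> _ _; exists (fun _ => x0); rewrite !big_nil !muln1.
  by apply: subset_leq_card; apply/fintype.subsetP => x; rewrite inE => /andP[].
move=> /andP[iNs us] HN.
have [v Hv] := pigeon (HN i (mem_head _ _)).
set U' := [set x in U | f i x != v].
have HN' : forall j, j \in s -> #|[set f j x | x in U']| <= N j.
  move=> j js; apply: leq_trans (HN j _); last by rewrite inE js orbT.
  apply: subset_leq_card; apply/fintype.subsetP => y /imsetP[x].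
  by rewrite inE => /andP[xU _] ->; apply: imset_f.
have [a Ha] := IH U' us HN'.
exists (fun j => if j == i then v else a j).
rewrite !big_cons eqxx.
have E : [set x in U | (f i x != v) && all (fun j => f j x != (if j == i then v else a j)) s]
       = [set x in U' | all (fun j => f j x != a j) s].
  apply/setP => x; rewrite !inE -andbA; congr (_ && (_ && _)).
  apply: eq_in_all => j js; case: (j =P i) => [ji|//]; by rewrite -ji js in iNs.
rewrite E.
have cardU : #|U| = #|[set x in U | f i x == v]| + #|U'|.
  rewrite -(cardsID [set x | f i x == v] U); congr (_ + _); apply: eq_card => x;
  by rewrite !inE andbC.
set A := #|[set x in U' | _]| in Ha *.
set P1 := \prod_(j <- s) N j in Ha *.
set P2 := \prod_(j <- s) (N j).-1 in Ha *.
set c := #|[set x in U | f i x == v]| in Hv cardU.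
have : A * P1 * N i <= #|U'| * P2 * N i by rewrite leq_mul2r Ha orbT.
move=> H1.
have H2 : #|U'| * N i <= #|U| * (N i).-1.
  rewrite cardU. nia.
have : #|U'| * P2 * N i <= #|U| * (N i).-1 * P2.
  rewrite -mulnA (mulnC P2) mulnA leq_mul2r H2 orbT //.
move=> H3.
have H4 := leq_trans H1 H3.
have E1 : A * (N i * P1) = A * P1 * N i by rewrite mulnCA mulnC.
have E2 : #|U| * ((N i).-1 * P2) = #|U| * (N i).-1 * P2 by rewrite mulnA.
by rewrite E1 E2.
Qed.
End Greedy.

Definition J k := trunc_log 2 (trunc_log 2 (trunc_log 2 k)).
Definition qq k := maxn 2 (k - k %/ (J k).+2).

Definition X0 j := 2 ^ j.
Definition K0 j := 2 ^ (X0 j).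
Definition pp (j : nat) := j.+2.
Definition KK j := 2 * pp j * K0 j.
Definition m0 j := 2 ^ (K0 j).
Definition m1 j := 2 ^ (KK j).
Definition nn j := m1 j * pp j.
Definition XX j := nn j * (KK j + pp j + 1) + 1.

Lemma leqXr a b e : a <= b -> a ^ e <= b ^ e.
Proof. by case: e => // e h; rewrite leq_exp2r. Qed.

Lemma exp2_ge a : a.+1 <= 2 ^ a.
Proof. elim: a => // a IH; rewrite expnS; lia. Qed.

Lemma exp2_ge2 a : 3 <= a -> (2 * a).+1 <= 2 ^ a.
Proof.
elim: a => // a IH ha; rewrite expnS.
case: (leqP 3 a) => h; first by have := IH h; lia.
by have -> : a = 2 by lia.
Qed.

Lemma exp2_ge3 a : 3 <= a -> (2 * a).+2 <= 2 ^ a.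
Proof.
elim: a => // a IH ha; rewrite expnS.
case: (leqP 3 a) => h; first by have := IH h; lia.
by have -> : a = 2 by lia.
Qed.

Lemma K0_big j : 3 <= j -> 4 * (pp j) ^ 2 <= K0 j.
Proof.
move=> j3; rewrite /K0 /X0 /pp.
have h1 : (2 * j).+2 <= 2 ^ j by exact: exp2_ge3.
have h2 : 2 ^ ((2 * j).+2) <= 2 ^ (2 ^ j) by rewrite leq_exp2l.
apply: leq_trans h2.
have h3 : j.+2 <= 2 ^ j by have := exp2_ge3 j3; lia.
have e : 2 ^ (2 * j).+2 = 4 * (2 ^ j) ^ 2.
  by rewrite -expnM (mulnC j 2) !expnS mulnA.
by rewrite e leq_mul2l /= leq_sqr.
Qed.

Lemma X0_ge j : 3 <= j -> 8 <= X0 j.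
Proof. by move=> j3; rewrite /X0 (_ : 8 = 2 ^ 3) // leq_exp2l. Qed.

Lemma K0_ge j : 3 <= j -> (2 * X0 j).+1 <= K0 j.
Proof. move=> j3; apply: exp2_ge2; have := X0_ge j3; lia. Qed.

Lemma N1 j : 3 <= j ->
  XX j ^ j.+1 * m0 j ^ j.+1 * (m0 j).+1 < m1 j ^ j.+1 * (m1 j).+1.
Proof.
move=> j3.
set r := j.+1.
have hK := K0_big j3. have hK' := K0_ge j3.
set B := pp j * (KK j + pp j + 1) + 1.
have m1pos : 0 < m1 j by rewrite expn_gt0.
have hX : XX j <= m1 j * B.
  rewrite /XX /B /nn; nia.
have hB : B <= K0 j * K0 j.
  have h := leq_mul hK (leqnn (K0 j)).
  have pp2 : 2 <= pp j by [].
  rewrite /B /KK; rewrite -mulnn in h; nia.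
have hKK : K0 j * K0 j = 2 ^ (2 * X0 j) by rewrite /K0 -expnD addnn -mul2n.
have e1 : XX j ^ r <= m1 j ^ r * 2 ^ (2 * X0 j * r).
  rewrite expnM -expnMn; apply: leqXr; rewrite -hKK.
  by apply: leq_trans hX _; rewrite leq_mul2l hB orbT.
have e2 : m0 j ^ r * (m0 j).+1 <= 2 ^ (K0 j * r + K0 j + 1).
  rewrite /m0 -expnM !expnD expn1 -mulnA leq_mul2l; apply/orP; right.
  have : 1 <= 2 ^ K0 j by rewrite expn_gt0.
  lia.
have e3 : 2 * X0 j * r + (K0 j * r + K0 j + 1) <= KK j.
  rewrite /KK /r /pp; nia.
have e4 : 2 ^ (2 * X0 j * r) * 2 ^ (K0 j * r + K0 j + 1) <= m1 j.
  by rewrite -expnD /m1 leq_exp2l.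
have e5 := leq_mul e1 e2.
rewrite -mulnA; apply: leq_ltn_trans e5 _.
rewrite -mulnA ltn_pmul2l ?expn_gt0 //; apply: leq_ltn_trans e4 _; exact: ltnSn.
Qed.

Lemma N2 j : (nn j).+2 <= 2 ^ (KK j + pp j + 1).
Proof.
have -> : 2 ^ (KK j + pp j + 1) = m1 j * (2 ^ pp j * 2).
  by rewrite /m1 (expnD 2 (KK j + pp j) 1) (expnD 2 (KK j) (pp j)) expn1 mulnA.
have h1 : (pp j).+2 <= 2 ^ pp j * 2.
  by have h0 := exp2_ge (pp j); lia.
have h2 : 1 <= m1 j by rewrite expn_gt0.
have h3 := leq_mul (leqnn (m1 j)) h1.
rewrite /nn; lia.
Qed.

Lemma J_region j k : 3 <= j -> m0 j * pp j <= k <= nn j -> J k = j.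
Proof.
move=> j3 /andP[lo hi].
have hK := K0_big j3.
have kpos : 0 < k by apply: leq_trans lo; rewrite muln_gt0 expn_gt0.
have t1 : K0 j <= trunc_log 2 k.
  apply: trunc_log_max => //; apply: leq_trans lo; rewrite /m0 leq_pmulr //.
have t2 : trunc_log 2 k < KK j + pp j.
  rewrite -(@ltn_exp2l 2) //; apply: leq_ltn_trans (trunc_logP _ kpos) _ => //.
  apply: leq_ltn_trans hi _; rewrite /nn /m1 expnD ltn_pmul2l ?expn_gt0 //.
  exact: exp2_ge.
have t3 : KK j + pp j <= 2 ^ (X0 j).*2.
  rewrite -addnn expnD -/(K0 j) /KK; rewrite -mulnn in hK.
  have h := leq_mul hK (leqnn (K0 j)). have hp : 2 <= pp j by []. nia.
have tpos : 0 < trunc_log 2 k by apply: leq_trans t1; rewrite expn_gt0.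
have u1 : X0 j <= trunc_log 2 (trunc_log 2 k) by apply: trunc_log_max.
have u2 : trunc_log 2 (trunc_log 2 k) < (X0 j).*2.
  rewrite -(@ltn_exp2l 2) //; apply: leq_ltn_trans (trunc_logP _ tpos) _ => //.
  by apply: leq_trans t2 t3.
rewrite /J; apply: trunc_log_eq => //.
rewrite -/(X0 j) u1 /= expnS -/(X0 j) mul2n //.
Qed.


Lemma card_range m a : #|[pred v : 'I_m | 1 <= v <= a]| <= a.
Proof.
rewrite cardE -(size_map val) -(size_iota 1 a).
apply: uniq_leq_size; first by rewrite map_inj_uniq ?enum_uniq //; exact: val_inj.
move=> y /mapP[v]; rewrite mem_enum inE => /andP[h1 h2] ->.
rewrite size_iota in h2; by rewrite mem_iota; change (0 < nat_of_ord v < 1 + a); lia.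
Qed.

Section Restr.
Variables (n M : nat) (q : nat -> nat).
Definition restr (f : {ffun 'I_n -> bool}) (x : {ffun 'I_n -> 'I_M.+1}) : {ffun 'I_n -> 'I_M.+1} :=
  [ffun k => if f k then x k else ord0].

Definition U0 : {set {ffun 'I_n -> 'I_M.+1}} := [set x : {ffun 'I_n -> 'I_M.+1} | [forall k : 'I_n, 1 <= x k <= q k.+1]].

Lemma card_restr f : #|[set restr f x | x in U0]| <= \prod_(k < n | f k) q k.+1.
Proof.
pose G (k : 'I_n) : pred 'I_M.+1 := if f k then [pred v : 'I_M.+1 | 1 <= v <= q k.+1] else pred1 ord0.
have sub : [set restr f x | x in U0] \subset [set x : {ffun 'I_n -> 'I_M.+1} | x \in family G].
  apply/fintype.subsetP => y /imsetP[x xU ->]; rewrite inE in xU; move/forallP: xU => xU.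
  rewrite inE; apply/familyP => k; rewrite /G ffunE.
  by case: (f k) => //=; rewrite inE xU.
apply: leq_trans (subset_leq_card sub) _.
rewrite cardsE (@card_family 'I_n (fun _ => 'I_M.+1) G) foldrE big_map big_enum /=.
rewrite [X in _ <= X]big_mkcond /=; apply: leq_prod => k _; rewrite /G.
case: (f k); first exact: card_range.
by rewrite card1.
Qed.
End Restr.


Lemma qq_period j m i : 3 <= j -> m0 j <= m < m1 j -> i < pp j ->
  qq (m * pp j + i) = m * j.+1 + i.
Proof.
move=> j3 /andP[lo hi] ip.
have hJ : J (m * pp j + i) = j.
  apply: J_region => //; apply/andP; split.
    by apply: leq_trans (leq_addr _ _); rewrite leq_mul2r lo orbT.
  rewrite /nn; apply: leq_trans (_ : m.+1 * pp j <= _); first by rewrite mulSn; lia.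
  by rewrite leq_mul2r hi orbT.
rewrite /qq hJ -/(pp j) divnMDl // divn_small // addn0.
have m2 : 2 <= m.
  apply: leq_trans lo; rewrite /m0 (_ : 2 = 2 ^ 1) // leq_exp2l // /K0 expn_gt0 //.
rewrite /pp in ip *.
have -> : m * j.+2 + i - m = m * j.+1 + i by rewrite !mulnS; lia.
apply/maxn_idPr; nia.
Qed.


Section RingPart.
Local Open Scope ring_scope.

Section RealLemmas.
Variable R : realFieldType.

Lemma tele (g : nat -> R) a b : (a <= b)%N -> (forall k, (a <= k <= b)%N -> g k != 0) ->
  \prod_(a <= k < b) (g k.+1 / g k) = g b / g a.
Proof.
move=> ab gnz; elim: b ab gnz => [|b IH].
  by rewrite leqn0 => /eqP -> gnz; rewrite big_geq // divff // gnz.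
rewrite leq_eqVlt => /orP[/eqP -> gnz|]; first by rewrite big_geq // divff // gnz ?leqnn.
rewrite ltnS => ab gnz; rewrite big_nat_recr //= IH //; last first.
  by move=> k /andP[h1 h2]; apply: gnz; rewrite h1 (leq_trans h2).
by rewrite mulrC mulrA divfK // gnz // ab /=.
Qed.

Lemma bern (x : R) n : 0 <= x -> 1 + n%:R * x <= (1 + x) ^+ n.
Proof.
move=> x0; elim: n => [|n IH]; first by rewrite mul0r addr0 expr0.
rewrite exprS; apply: le_trans (_ : (1 + x) * (1 + n%:R * x) <= _); last first.
  have hx : 0 < 1 + x by lra.
  by rewrite ler_pM2l.
rewrite mulrDl mul1r mulrDr mulr1 -natr1 mulrDl mul1r.
have : 0 <= x * (n%:R * x) by rewrite mulr_ge0 // mulr_ge0.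
lra.
Qed.

Lemma period_prod (g : nat -> R) a b p : (a <= b)%N ->
  \prod_(a * p <= k < b * p) g k = \prod_(a <= m < b) \prod_(i < p) g (m * p + i)%N.
Proof.
elim: b => [|b IH]; first by rewrite leqn0 => /eqP ->; rewrite !big_geq.
rewrite leq_eqVlt => /orP[/eqP ->|]; first by rewrite !big_geq.
rewrite ltnS => ab; rewrite big_nat_recr //= -IH //.
rewrite (@big_cat_nat _ _ _ (b * p)%N) /=; last 2 first.
- by rewrite leq_mul2r ab orbT.
- by rewrite leq_mul2r leqnSn orbT.
congr (_ * _); rewrite mulSn -{1}(add0n (b * p)%N) big_addn addnK big_mkord.
by apply: eq_bigr => i _; rewrite addnC.
Qed.
End RealLemmas.

Section Main.
Variable R : realFieldType.

Definition PP j : R := \prod_(m0 j * pp j <= k < m1 j * pp j) (1 + ((qq k)%:R)^-1).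

Lemma inner_prod (c p : nat) : (0 < c)%N ->
  \prod_(i < p) (1 + ((c + i)%:R : R)^-1) = (c + p)%:R / c%:R.
Proof.
move=> c0.
have -> : \prod_(i < p) (1 + ((c + i)%:R : R)^-1) = \prod_(0 <= i < p) (((c + i.+1)%:R : R) / (c + i)%:R).
  rewrite big_mkord; apply: eq_bigr => i _.
  have h : ((c + i)%:R : R) != 0 by rewrite pnatr_eq0; lia.
  by rewrite addnS -natr1 mulrDl divff // div1r.
rewrite (@tele R (fun i => (c + i)%:R)) // ?addn0 // => k _.
rewrite pnatr_eq0; lia.
Qed.

Lemma PP_period j : (3 <= j)%N ->
  PP j = \prod_(m0 j <= m < m1 j) ((m * j.+1 + pp j)%:R / (m * j.+1)%:R).
Proof.
move=> j3; rewrite /PP period_prod; last first.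
  by rewrite /m0 /m1 leq_exp2l // /KK /pp; nia.
rewrite big_nat_cond [RHS]big_nat_cond; apply: eq_bigr => m /andP[hm _].
rewrite -inner_prod; last first.
  have : (2 <= m)%N by apply: leq_trans (andP hm).1; rewrite /m0 (_ : 2%N = 2 ^ 1)%N // leq_exp2l // /K0 expn_gt0.
  lia.
by apply: eq_bigr => i _; rewrite qq_period.
Qed.

Lemma F_bound (m r : nat) : (1 <= m)%N -> (1 <= r)%N ->
  ((m.+1)%:R / m%:R) ^+ r * ((m.+2)%:R / (m.+1)%:R)
    <= (((m * r + r.+1)%:R / (m * r)%:R) : R) ^+ r.
Proof.
move=> m1 r1.
have mR : (m%:R : R) != 0 by rewrite pnatr_eq0; lia.
have rR : (r%:R : R) != 0 by rewrite pnatr_eq0; lia.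
have m1R : ((m.+1)%:R : R) != 0 by rewrite pnatr_eq0.
have e : ((m * r + r.+1)%:R / (m * r)%:R : R) =
         ((m.+1)%:R / m%:R) * (1 + (((m.+1) * r)%:R)^-1).
  have m1R' : (m%:R + 1 : R) != 0 by rewrite natr1.
  rewrite !natrD !natrM -!natr1; field.
  have hh : (r%:R + m%:R * r%:R : R) != 0.
    by rewrite -natrM -natrD pnatr_eq0; lia.
  by rewrite hh mR rR.
rewrite e (exprMn r (m.+1%:R / m%:R)) ler_pM2l; last by apply: exprn_gt0; rewrite divr_gt0 // ltr0n //.
apply: le_trans (_ : _ <= 1 + r%:R * ((m.+1 * r)%:R)^-1) (@bern R _ r _); last first.
  by rewrite invr_ge0 ler0n.
have m1R' : (m%:R + 1 : R) != 0 by rewrite natr1.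
have -> : 1 + r%:R * ((m.+1 * r)%:R)^-1 = (m.+2%:R / m.+1%:R : R).
  rewrite natrM -!natr1; field.
  by rewrite m1R' rR.
exact: lexx.
Qed.

Lemma PP_pow j : (3 <= j)%N ->
  ((m1 j)%:R / (m0 j)%:R) ^+ j.+1 * ((m1 j).+1%:R / (m0 j).+1%:R) <= PP j ^+ j.+1.
Proof.
move=> j3.
have m0pos : (1 <= m0 j)%N by rewrite expn_gt0.
have m01 : (m0 j <= m1 j)%N by rewrite /m0 /m1 leq_exp2l // /KK /pp; nia.
rewrite PP_period // -prodrXl.
have t1 := @tele R (fun k => k%:R) _ _ m01.
have t2 := @tele R (fun k => k.+1%:R) _ _ m01.
rewrite /= in t1 t2.
rewrite -t1; last by move=> k /andP[h _]; rewrite pnatr_eq0; lia.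
rewrite -t2; last by move=> k _; rewrite pnatr_eq0.
rewrite -prodrXl -big_split /=.
rewrite big_nat_cond [X in _ <= X]big_nat_cond.
apply: ler_prod => m /andP[/andP[hm _] _]; apply/andP; split.
  by apply: mulr_ge0; [apply: exprn_ge0|]; apply: divr_ge0; apply: ler0n.
have m1' : (1 <= m)%N by apply: leq_trans hm.
by have := F_bound m1' (isT : (1 <= j.+1)%N); rewrite /pp.
Qed.

Lemma PP_gt j : (3 <= j)%N -> (XX j)%:R < PP j.
Proof.
move=> j3.
have h := N1 j3.
have m0pos : (0 < m0 j)%N by rewrite expn_gt0.
have hR : ((XX j)%:R : R) ^+ j.+1 < ((m1 j)%:R / (m0 j)%:R) ^+ j.+1 * ((m1 j).+1%:R / (m0 j).+1%:R).
  have h' : ((XX j)%:R ^+ j.+1 * (m0 j)%:R ^+ j.+1 * (m0 j).+1%:R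
               < (m1 j)%:R ^+ j.+1 * (m1 j).+1%:R :> R).
    by rewrite -!natrX -!natrM ltr_nat.
  rewrite expr_div_n mulf_div ltr_pdivlMr; last first.
    by rewrite mulr_gt0 // ?exprn_gt0 // ltr0n.
  by rewrite mulrA.
have hP := PP_pow j3.
have := lt_le_trans hR hP.
have P0 : 0 <= PP j.
  rewrite /PP; apply: prodr_ge0 => k _; apply: addr_ge0 => //; rewrite invr_ge0 ler0n //.
by rewrite ltr_pXn2r // qualifE /= ler0n.
Qed.
End Main.


Section Sum.
Variable R : comNzRingType.

Lemma sum_sub (n : nat) (V : pred 'I_n) (y : 'I_n -> R) :
  \sum_(f : {ffun 'I_n -> bool} | [forall k, f k ==> V k]) \prod_(k | f k) y k
    = \prod_(k | V k) (1 + y k).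
Proof.
pose G (k : 'I_n) (b : bool) := if b then (if V k then y k else 0) else 1.
have e1 : \prod_(k | V k) (1 + y k) = \prod_k \sum_(b : bool) G k b.
  rewrite [RHS](bigID V) /= [X in _ * X]big1 ?mulr1; last first.
    by move=> k /negbTE Vk; rewrite big_bool /G /= Vk add0r.
  by apply: eq_bigr => k Vk; rewrite big_bool /G /= Vk addrC.
rewrite e1 bigA_distr_bigA /= [RHS](bigID (fun f : {ffun 'I_n -> bool} => [forall k, f k ==> V k])) /=.
rewrite [X in _ = _ + X]big1 ?addr0; last first.
  move=> f /forallPn[k]; rewrite negb_imply => /andP[fk Vk].
  by rewrite (bigD1 k) //= /G fk (negbTE Vk) mul0r.
apply: eq_bigr => f /forallP sub.
rewrite [RHS](bigID (fun k => f k)) /= [X in _ = _ * X]big1 ?mulr1; last first.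
  by move=> k /negbTE fk; rewrite /G fk.
by apply: eq_bigr => k fk; rewrite /G fk (implyP (sub k) fk).
Qed.

Lemma sum_sub1 (n : nat) (V : pred 'I_n) (y : 'I_n -> R) :
  \sum_(f : {ffun 'I_n -> bool} | [forall k, f k ==> V k] && [exists k, f k]) \prod_(k | f k) y k
    = \prod_(k | V k) (1 + y k) - 1.
Proof.
rewrite -sum_sub [X in _ = X - _](bigD1 [ffun => false]) /=; last first.
  by apply/forallP => k; rewrite ffunE.
rewrite (@big_pred0 _ _ _ _ _ (fun k => [ffun=> false] k)) => [|k]; last by rewrite ffunE.
rewrite addrC addrK; apply: eq_bigl => f.
congr (_ && _); apply/idP/idP.
  by move=> /existsP[k fk]; apply/eqP => /ffunP/(_ k); rewrite ffunE fk.
move=> fn0; case/boolP: [exists k, f k] => // /existsPn h.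
exfalso; move/eqP: fn0; apply; apply/ffunP => k; rewrite ffunE; exact/negbTE/h.
Qed.
End Sum.

End RingPart.
Section Liminf.
Local Open Scope ring_scope.
Local Open Scope classical_set_scope.
Local Notation R := Rdefinitions.R.

Lemma qq_eq i : (4 <= i)%N -> qq i = (i - i %/ (J i).+2)%N.
Proof.
move=> i4; rewrite /qq; apply/maxn_idPr.
have h : (i %/ (J i).+2 <= i %/ 2)%N by apply: leq_div2l.
have h2 : (i %/ 2 * 2 <= i)%N by rewrite leq_divM.
have h3 : (i < (i %/ 2).+1 * 2)%N by rewrite ltn_ceil.
lia.
Qed.

Lemma ratio_bound i : (4 <= i)%N ->
  1 - ((J i).+2%:R : R)^-1 <= ((qq i)%:R / i%:R : R) <= 1.
Proof.
move=> i4; rewrite qq_eq //.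
set p := (J i).+2.
have ip : (i %/ p * p <= i)%N by rewrite leq_divM.
have iR : (0 : R) < i%:R by rewrite ltr0n; lia.
have pR : (0 : R) < p%:R by rewrite ltr0n.
rewrite natrB ?leq_div //; apply/andP; split.
  have h1 : ((i %/ p)%:R : R) <= i%:R / p%:R by rewrite ler_pdivlMr // -natrM ler_nat.
  rewrite ler_pdivlMr // mulrBl mul1r (mulrC (p%:R^-1)).
  lra.
by rewrite ler_pdivrMr // mul1r lerBlDr lerDl ler0n.
Qed.

Lemma J_ge j k : (2 ^ (2 ^ (2 ^ j)) <= k)%N -> (j <= J k)%N.
Proof.
move=> hk.
have k0 : (0 < k)%N by apply: leq_trans hk; rewrite expn_gt0.
have t1 : (2 ^ (2 ^ j) <= trunc_log 2 k)%N by apply: trunc_log_max.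
have t2 : (2 ^ j <= trunc_log 2 (trunc_log 2 k))%N by apply: trunc_log_max.
by apply: trunc_log_max.
Qed.

Lemma ratio_cvg : (fun k => ((qq k.+1)%:R / (k.+1)%:R : R)) @ \oo --> (1 : R).
Proof.
apply/(@cvgrPdist_le _ R^o) => e e0.
have ei : 0 <= e^-1 by rewrite invr_ge0 ltW.
have hN := archi_boundP ei.
set N := Num.bound e^-1 in hN.
exists (maxn 4 (2 ^ (2 ^ (2 ^ N)))) => // k /= hk.
have i4 : (4 <= k.+1)%N by apply: leq_trans (leq_maxl _ _) (leqW hk).
have hJ : (N <= J k.+1)%N by apply: J_ge; apply: leq_trans (leq_maxr _ _) (leqW hk).
have /andP[b1 b2] := ratio_bound i4.
rewrite ger0_norm ?subr_ge0 //.
have hJe : ((J k.+1).+2%:R : R)^-1 <= e.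
  rewrite -[e]invrK lef_pV2 ?posrE ?ltr0n ?invr_gt0 //.
  apply: ltW; apply: lt_le_trans hN _; rewrite ler_nat; lia.
apply: le_trans _ hJe; rewrite lerBlDr addrC -lerBlDr; exact: b1.
Qed.

Lemma liminf_ratio : limn_einf (ratio_seq qq) = 1%E.
Proof.
have h : ratio_seq qq @ \oo --> 1%E.
  apply: cvg_EFin; first by near=> k.
  exact: ratio_cvg.
exact: (cvg_limn_einf_sup h).1.
Unshelve. all: by end_near.
Qed.

End Liminf.
Section Final.
Local Open Scope ring_scope.
Local Notation R := Rdefinitions.R.

Lemma lerXr (RR : realDomainType) (x y : RR) n : 0 <= x -> x <= y -> x ^+ n <= y ^+ n.
Proof. move=> x0 xy; apply: (lerXn2r n) => //; rewrite nnegrE //; exact: le_trans xy. Qed.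

Section Assembly.
Variable j : nat.
Hypothesis j3 : (3 <= j)%N.
Local Notation n := (nn j).
Definition Vp (k : 'I_n) : bool := (m0 j * pp j <= k.+1 < n)%N.
Definition Fam : pred {ffun 'I_n -> bool} :=
  fun f : {ffun 'I_n -> bool} => [forall k, f k ==> Vp k] && [exists k, f k].
Definition Nf (f : {ffun 'I_n -> bool}) : nat := (\prod_(k < n | f k) qq k.+1)%N.

Lemma qq_ge2 k : (2 <= qq k)%N. Proof. exact: leq_maxl. Qed.

Lemma Nf_gt0 f : (0 < Nf f)%N.
Proof. rewrite /Nf prodn_gt0 // => k; apply: leq_trans (qq_ge2 _). done. Qed.

Lemma PP_ord :
  \prod_(k < n | Vp k) (1 + ((qq k.+1)%:R : R)^-1) = PP R j.
Proof.
pose F i := 1 + ((qq i)%:R : R)^-1.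
pose P i := (m0 j * pp j <= i < n)%N.
have -> : \prod_(k < n | Vp k) (1 + ((qq k.+1)%:R : R)^-1) = \prod_(0 <= i < n | P i.+1) F i.+1.
  by rewrite big_mkord.
have -> : \prod_(0 <= i < n | P i.+1) F i.+1 = \prod_(1 <= i < n.+1 | P i) F i.
  by rewrite big_add1.
rewrite /PP -/n (@big_nat_widenl _ _ _ (m0 j * pp j) 1); last first.
  by rewrite muln_gt0 expn_gt0.
by rewrite (@big_nat_widen _ _ _ 1 n n.+1) //; apply: eq_bigl => i; rewrite /P andbC.
Qed.

Lemma sumN : \sum_(f <- enum Fam) ((Nf f)%:R : R)^-1 = PP R j - 1.
Proof.
rewrite big_enum /= -PP_ord -sum_sub1.
apply: eq_bigr => f _; rewrite /Nf natr_prod prodfV //.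
Qed.

Lemma expR_big : ((n.+1 ^ n)%:R : R) < expR (PP R j - 1).
Proof.
set c := (KK j + pp j + 1)%N.
have hP := PP_gt R j3.
have e1 : expR ((n * c)%:R : R) < expR (PP R j - 1).
  rewrite ltr_expR; have e : ((XX j)%:R : R) = (n * c)%:R + 1 by rewrite /XX natrD.
  rewrite e in hP; lra.
apply: le_lt_trans e1.
rewrite natrM expRM_natl.
have h2 : ((2 ^ c)%:R : R) <= expR c%:R.
  rewrite -[c%:R]mulr1 expRM_natl natrX; apply: (lerXn2r c); rewrite ?nnegrE ?ler0n ?expR_ge0 //.
  by have := expR_ge1Dx (1 : R); rewrite (_ : 1 + 1 = 2%:R).
apply: le_trans (_ : ((2 ^ c)%:R : R) ^+ n <= _); last first.
  by apply: (@lerXr R); rewrite ?ler0n.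
rewrite natrX; apply: (@lerXr R); rewrite ?ler0n // ler_nat.
by apply: leq_trans (N2 j); exact: leqnSn.
Qed.

Lemma key (U : nat) : (U <= n.+1 ^ n)%N ->
  (U * \prod_(f <- enum Fam) (Nf f).-1 < \prod_(f <- enum Fam) Nf f)%N.
Proof.
move=> hU.
set s := enum Fam.
rewrite -(ltr_nat R) natrM !natr_prod.
have hA : 0 < \prod_(f <- s) ((Nf f)%:R : R).
  by apply: prodr_gt0 => f _; rewrite ltr0n Nf_gt0.
have eB : \prod_(f <- s) (((Nf f).-1)%:R : R) =
          \prod_(f <- s) ((Nf f)%:R : R) * \prod_(f <- s) (1 - ((Nf f)%:R : R)^-1).
  rewrite -big_split /=; apply: eq_bigr => f _.
  have h0 : ((Nf f)%:R : R) != 0 by rewrite pnatr_eq0 -lt0n Nf_gt0.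
  rewrite mulrBr mulr1 divff //.
  by rewrite -[in RHS](prednK (Nf_gt0 f)) -natr1 addrK.
have hE : \prod_(f <- s) (1 - ((Nf f)%:R : R)^-1) <= expR (- (PP R j - 1)).
  rewrite -sumN -sumrN expR_sum; apply: ler_prod => f _; apply/andP; split.
    rewrite subr_ge0 invf_le1 ?ltr0n ?Nf_gt0 // ler1n Nf_gt0 //.
  by have := expR_ge1Dx (- ((Nf f)%:R : R)^-1).
rewrite eB mulrCA gtr_pMr //.
have hU' : (U%:R : R) <= (n.+1 ^ n)%:R by rewrite ler_nat.
have hpos : 0 <= \prod_(f <- s) (1 - ((Nf f)%:R : R)^-1).
  apply: prodr_ge0 => f _; rewrite subr_ge0 invf_le1 ?ltr0n ?Nf_gt0 // ler1n Nf_gt0 //.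
apply: le_lt_trans (_ : U%:R * expR (- (PP R j - 1)) < 1).
  by apply: ler_wpM2l.
rewrite expRN ltr_pdivrMr ?expR_gt0 // mul1r.
exact: le_lt_trans hU' expR_big.
Qed.
End Assembly.

Lemma qq_le i : (qq i <= maxn 2 i)%N.
Proof. rewrite /qq geq_max leq_maxl /=; apply: leq_trans (leq_maxr 2 i); exact: leq_subr. Qed.

End Final.

Theorem proposition4p1 :
  exists q : nat -> nat,
    (forall k : nat, (1 <= k)%N -> (2 <= q k)%N) /\
    limn_einf (ratio_seq q) = 1%E /\
    (forall C : nat, (0 < C)%N ->
       exists n : nat, exists Acal : ('I_n -> option nat) -> Prop,
         (forall A, Acal A -> hyperplane q A /\ has_fixed A) /\
         (forall x : 'I_n -> nat, inQ q x -> exists A, Acal A /\ in_hyp x A) /\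
         (forall A B, Acal A -> Acal B -> A <> B -> ~ parallel A B) /\
         (forall A, Acal A -> forall k : 'I_n, (k.+1 <= C)%N -> ~~ fixedc A k)).
Proof.
exists qq; split; first by move=> k _; exact: leq_maxl.
split; first exact: liminf_ratio.
move=> C C0.
pose j := (C + 3)%N.
have j3 : (3 <= j)%N by rewrite /j; lia.
exists (nn j).
pose s := enum (@Fam j).
pose T := {ffun 'I_(nn j) -> 'I_(nn j).+1}.
have us : uniq s by exact: enum_uniq.
have hcard : forall f, f \in s -> (#|[set restr f x | x in U0 (nn j) (nn j) qq]| <= @Nf j f)%N.
  by move=> f _; exact: card_restr.
have [a Ha] := @greedy T T {ffun 'I_(nn j) -> bool} [ffun => ord0] (@restr (nn j) (nn j)) (@Nf j) s (U0 (nn j) (nn j) qq) us hcard.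
have hU0 : (#|U0 (nn j) (nn j) qq| <= (nn j).+1 ^ (nn j))%N.
  by apply: leq_trans (max_card _) _; rewrite card_ffun !card_ord.
have hk := key j3 hU0.
have h0 : #|[set x in U0 (nn j) (nn j) qq | all (fun i => restr i x != a i) s]| = 0%N.
  have h := leq_ltn_trans Ha hk.
  rewrite -[X in (_ < X)%N]mul1n ltn_pmul2r in h; last first.
    by rewrite prodn_gt0 // => f; exact: Nf_gt0.
  by move: h; rewrite ltnS leqn0 => /eqP.
have cov : forall x, x \in U0 (nn j) (nn j) qq -> exists2 f, f \in s & restr f x = a f.
  move=> x xU.
  have : x \notin [set x in U0 (nn j) (nn j) qq | all (fun i => restr i x != a i) s].
    by rewrite (cards0_eq h0) inE.
  rewrite inE xU /= => /allPn[f fs /negPn/eqP e]; by exists f.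
pose Ahyp (f : {ffun 'I_(nn j) -> bool}) : 'I_(nn j) -> option nat :=
  fun k => if f k then Some (nat_of_ord (a f k)) else None.
have fixA : forall f k, fixedc (Ahyp f) k = f k.
  by move=> f k; rewrite /fixedc /Ahyp; case: (f k).
exists (fun A => exists f, [/\ f \in s, (forall k, f k -> (1 <= a f k <= qq k.+1)%N) & A = Ahyp f]).
split.
  move=> A [f [fs hv ->]]; split.
    by move=> k; rewrite /Ahyp; case fk: (f k) => //; exact: hv.
  rewrite mem_enum in fs; move/andP: fs => [_ /existsP [k fk]].
  by exists k; rewrite fixA.
split.
  move=> x xQ.
  have n2 : (2 <= nn j)%N.
    rewrite /nn /m1 /pp; apply: leq_trans (_ : 2 <= 1 * j.+2)%N _ => //.
    by rewrite leq_mul2r expn_gt0 orbT.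
  have xle : forall k : 'I_(nn j), (x k <= nn j)%N.
    move=> k; have /andP[_ h] := xQ k; apply: leq_trans h _.
    by apply: leq_trans (qq_le _) _; rewrite geq_max n2 ltn_ord.
  pose xt : T := [ffun k => inord (x k)].
  have xtk : forall k, nat_of_ord (xt k) = x k.
    by move=> k; rewrite ffunE inordK // ltnS.
  have xtU : xt \in U0 (nn j) (nn j) qq.
    by rewrite inE; apply/forallP => k; rewrite xtk; exact: xQ.
  have [f fs e] := cov xt xtU.
  have afk : forall k, f k -> nat_of_ord (a f k) = x k.
    by move=> k fk; rewrite -e ffunE fk xtk.
  exists (Ahyp f); split.
    exists f; split => // k fk; rewrite afk //; exact: xQ.
  by move=> k; rewrite /Ahyp; case fk: (f k) => //; rewrite afk.
split.
  move=> A B [f [fs _ ->]] [g [gs _ ->]] neq par; apply: neq.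
  have -> // : f = g.
  by apply/ffunP => k; have := par k; rewrite !fixA => ->.
move=> A [f [fs _ ->]] k kC; rewrite fixA.
apply/negP => fk.
rewrite mem_enum in fs; move/andP: fs => [/forallP /(_ k) /implyP /(_ fk) /andP [lo _] _].
have : (C < m0 j * pp j)%N.
  have e1 := exp2_ge j. have e2 := exp2_ge (X0 j). have e3 := exp2_ge (K0 j).
  rewrite /m0 /K0 /X0 in e1 e2 e3 *; rewrite /pp /j in e1 e2 e3 *.
  apply: (@leq_trans (2 ^ 2 ^ 2 ^ (C + 3))%N); last by rewrite leq_pmulr.
  lia.
lia.
Qed.
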